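(* Let $B_0,B_1\subset\mathbb Z^k$ be $k$-dimensional boxes of size $1$, let $\bar S\subset\mathbb Q^k$ be the convex hull of $B_0\cup B_1$ in $\mathbb Q^k$, and let $S=\bar S\cap\mathbb Z^k$. Then $S$ is lattice path connected.
   Context: A $k$-dimensional box of size $1$ is $\{\vec z\in\mathbb Z^k: c_i\le z_i\le c_i+1,\ i=1,\dots,k\}$ for some $c_i\in\mathbb Z$. A lattice path is a sequence $(T_i)_{i\ge1}$ in $\mathbb Z^k$ with $T_i-T_{i-1}\in\{\pm\vec e_1,\dots,\pm\vec e_k\}$ for all $i>1$. A set $S\subset\mathbb Z^k$ is lattice path connected if for all $\vec z_1,\vec z_2\in S$ there is a lattice path contained in $S$ with $T_1=\vec z_1$ and $T_i=\vec z_2$ for some $i\ge1$. *)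

(* Defs.v *)
From mathcomp Require Import all_boot all_order all_algebra.
Set Implicit Arguments. Unset Strict Implicit. Unset Printing Implicit Defensive.
Import Order.TTheory GRing.Theory Num.Theory.
Local Open Scope ring_scope.

Definition box (k : nat) (c : 'rV[int]_k) : pred 'rV[int]_k :=
  fun z => [forall i, (c 0 i <= z 0 i) && (z 0 i <= c 0 i + 1)].

Definition toQ (k : nat) (z : 'rV[int]_k) : 'rV[rat]_k := map_mx intr z.

Definition in_conv_hull (k : nat) (A : 'rV[int]_k -> Prop) (x : 'rV[rat]_k) : Prop :=
  exists (n : nat) (lam : 'I_n -> rat) (p : 'I_n -> 'rV[int]_k),
    (forall i, 0 <= lam i) /\ (forall i, A (p i)) /\
    \sum_(i < n) lam i = 1 /\
    \sum_(i < n) lam i *: toQ (p i) = x.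

Definition lattice_step (k : nat) (a b : 'rV[int]_k) : Prop :=
  exists j : 'I_k, b - a = delta_mx 0 j \/ b - a = - delta_mx 0 j.

Fixpoint lattice_path (k : nat) (x : 'rV[int]_k) (s : seq 'rV[int]_k) : Prop :=
  match s with
  | [::] => True
  | y :: s' => lattice_step x y /\ lattice_path y s'
  end.

Definition lattice_path_connected (k : nat) (S : 'rV[int]_k -> Prop) : Prop :=
  forall z1 z2, S z1 -> S z2 ->
    exists s : seq 'rV[int]_k,
      lattice_path z1 s /\ (forall y, y \in z1 :: s -> S y) /\ z2 \in z1 :: s.

(* Main.v *)
Require Import Defs.
From mathcomp Require Import all_boot all_order all_algebra.
From mathcomp Require Import ring lra zify.
Import Order.TTheory GRing.Theory Num.Theory.
Set Implicit Arguments. Unset Strict Implicit.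
Local Open Scope ring_scope.

Lemma conv_fin k (A : 'rV[int]_k -> Prop) (T : finType) (lam : T -> rat)
  (p : T -> 'rV[int]_k) x :
  (forall t, 0 <= lam t) -> (forall t, A (p t)) -> \sum_t lam t = 1 ->
  \sum_t lam t *: toQ (p t) = x -> in_conv_hull A x.
Proof.
move=> h0 hA h1 hx.
exists #|T|, (fun i => lam (enum_val i)), (fun i => p (enum_val i)).
split=>//; split=>//; split.
  by rewrite -(big_enum_val (A:=T) lam) -h1; apply: eq_bigl => t; rewrite inE.
rewrite -(big_enum_val (A:=T) (fun t => lam t *: toQ (p t))) -hx.
by apply: eq_bigl => t; rewrite inE.
Qed.

Definition pl k (c0 c1 : 'rV[int]_k) (l : rat) i : rat :=
  (c1 0 i)%:~R + l * ((c0 0 i)%:~R - (c1 0 i)%:~R).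

Definition PP k (c0 c1 : 'rV[int]_k) (l : rat) (z : 'rV[int]_k) :=
  0 <= l <= 1 /\ forall i, pl c0 c1 l i <= (z 0 i)%:~R <= pl c0 c1 l i + 1.

Lemma sum_if n (lam : 'I_n -> rat) (b : 'I_n -> bool) (x y : rat) :
  \sum_i lam i = 1 ->
  \sum_i lam i * (if b i then x else y) =
  y + (\sum_(i | b i) lam i) * (x - y).
Proof.
move=> h1.
have -> : \sum_i lam i * (if b i then x else y) =
   \sum_i (lam i * y + (if b i then lam i else 0) * (x - y)).
  by apply: eq_bigr => i _; case: (b i); ring.
rewrite big_split /= -mulr_suml h1 mul1r -mulr_suml; congr (_ + _ * _).
by rewrite [RHS]big_mkcond.
Qed.

Lemma S_PP k (c0 c1 z : 'rV[int]_k) :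
  in_conv_hull (fun p => box c0 p \/ box c1 p) (toQ z) ->
  exists l, PP c0 c1 l z.
Proof.
move=> [n [lam [p [h0 [hA [h1 hx]]]]]].
set b := fun j => box c0 (p j).
exists (\sum_(j | b j) lam j).
have hle : \sum_(j | b j) lam j <= 1.
  rewrite -h1 [X in _ <= X](bigID b) /= lerDl; exact: sumr_ge0.
split; first by rewrite hle sumr_ge0.
move=> i.
have hz : (z 0 i)%:~R = \sum_j lam j * (p j 0 i)%:~R :> rat.
  have -> : (z 0 i)%:~R = toQ z 0 i :> rat by rewrite mxE.
  rewrite -hx summxE; apply: eq_bigr => j _; by rewrite !mxE.
have hpl : pl c0 c1 (\sum_(j | b j) lam j) i =
   \sum_j lam j * (if b j then (c0 0 i)%:~R else (c1 0 i)%:~R).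
  by rewrite sum_if // /pl mulrC.
have hpl1 : pl c0 c1 (\sum_(j | b j) lam j) i + 1 =
   \sum_j lam j * (if b j then (c0 0 i)%:~R + 1 else (c1 0 i)%:~R + 1).
  rewrite sum_if // /pl; ring.
rewrite hz hpl1 hpl; apply/andP; split; apply: ler_sum => j _;
  apply: ler_wpM2l => //; rewrite /b; case: ifP => hb.
- by move: hb => /forallP/(_ i)/andP[+ _]; rewrite ler_int.
- case: (hA j) => [hb'|/forallP/(_ i)/andP[+ _]]; first by rewrite hb' in hb.
  by rewrite ler_int.
- by move: hb => /forallP/(_ i)/andP[_]; rewrite -(ler_int rat) rmorphD.
- case: (hA j) => [hb'|/forallP/(_ i)/andP[_]]; first by rewrite hb' in hb.
  by rewrite -(ler_int rat) rmorphD.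
Qed.

Definition wt k (t : 'I_k -> rat) (f : {ffun 'I_k -> bool}) : rat :=
  \prod_i (if f i then t i else 1 - t i).

Lemma wt_ge0 k (t : 'I_k -> rat) f : (forall i, 0 <= t i <= 1) -> 0 <= wt t f.
Proof.
move=> ht; apply: prodr_ge0 => i _; have /andP[a b] := ht i.
by case: (f i) => //; rewrite subr_ge0.
Qed.

Lemma wt_sum k (t : 'I_k -> rat) : \sum_f wt t f = 1.
Proof.
rewrite /wt -(bigA_distr_bigA (fun i (b : bool) => if b then t i else 1 - t i)).
by apply: big1 => i _; rewrite big_bool /= addrC subrK.
Qed.

Lemma wt_sumi k (t : 'I_k -> rat) i :
  \sum_f wt t f * ((f i : nat)%:R) = t i.
Proof.
pose G j (b : bool) := (if b then t j else 1 - t j) * (if j == i then (b : nat)%:R else 1).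
have -> : \sum_f wt t f * ((f i : nat)%:R) = \sum_(f : {ffun 'I_k -> bool}) \prod_j G j (f j).
  apply: eq_bigr => f _; rewrite /G big_split /= /wt; congr (_ * _).
  by rewrite (bigD1 i) //= eqxx big1 ?mulr1 // => j /negbTE ->.
rewrite -bigA_distr_bigA (bigD1 i) //= [X in _ * X]big1 ?mulr1.
  by rewrite big_bool /G eqxx /= mulr1 mulr0 addr0.
by move=> j /negbTE hj; rewrite big_bool /G hj !mulr1 /= addrC subrK.
Qed.

Lemma PP_S k (c0 c1 : 'rV[int]_k) l z : PP c0 c1 l z ->
  in_conv_hull (fun p => box c0 p \/ box c1 p) (toQ z).
Proof.
move=> [/andP[l0 l1] hz].
pose t i := (z 0 i)%:~R - pl c0 c1 l i.
have ht i : 0 <= t i <= 1.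
  have /andP[a b] := hz i; rewrite /t subr_ge0 a /=; lra.
pose lam (p : bool * {ffun 'I_k -> bool}) := (if p.1 then l else 1 - l) * wt t p.2.
pose pt (p : bool * {ffun 'I_k -> bool}) :=
  (if p.1 then c0 else c1) + \row_j (((p.2 j) : nat)%:Z).
apply: (@conv_fin _ _ _ lam pt).
- move=> [b f]; rewrite /lam /=; apply: mulr_ge0; last exact: wt_ge0.
  by case: b => //; rewrite subr_ge0.
- move=> [b f]; rewrite /pt /=.
  have hb c : box c (c + \row_j (((f j) : nat)%:Z)).
    apply/forallP => j; rewrite !mxE; case: (f j) => /=; lia.
  by case: b; [left|right]; apply: hb.
- rewrite -(pair_bigA _ (fun b f => lam (b, f))) big_bool /= /lam /=.
  rewrite -!mulr_sumr wt_sum; ring.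
apply/rowP => i; rewrite summxE mxE.
under eq_bigr => p _ do rewrite mxE.
rewrite -(pair_bigA _ (fun b f => lam (b, f) * toQ (pt (b, f)) 0 i)) big_bool /=.
have F (b : bool) :
  \sum_f lam (b, f) * toQ (pt (b, f)) 0 i =
  (if b then l else 1 - l) * (((if b then c0 else c1) 0 i)%:~R + t i).
  transitivity (\sum_f (if b then l else 1 - l) *
     (wt t f * ((if b then c0 else c1) 0 i)%:~R + wt t f * (f i : nat)%:R)).
    apply: eq_bigr => f _; rewrite /lam /pt /= !mxE rmorphD /=.
    have -> : ((f i : nat)%:Z)%:~R = (f i : nat)%:R :> rat by case: (f i).
    ring.
  by rewrite -mulr_sumr big_split /= -mulr_suml wt_sum wt_sumi mul1r.
rewrite !F /t /pl /=; ring.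
Qed.

Definition c1' k (c0 c1 : 'rV[int]_k) : 'rV[int]_k :=
  \row_i (if c0 0 i - c1 0 i < 0 then c1 0 i + 1 else c1 0 i).
Definition Mz k (c z : 'rV[int]_k) : nat := (\sum_i absz (z 0 i - c 0 i)%R)%N.
Definition Lf k (c0 c1 z : 'rV[int]_k) i : rat :=
  let a := (c1 0 i)%:~R in let d := (c0 0 i)%:~R - a in let x := (z 0 i)%:~R in
  if 0 < d then (x - 1 - a) / d else if d < 0 then (x - a) / d else 0.

Lemma Lf_le k (c0 c1 z : 'rV[int]_k) l : PP c0 c1 l z -> forall i, Lf c0 c1 z i <= l.
Proof.
move=> [/andP[l0 l1] hz] i; move: (hz i); rewrite /pl /Lf /=.
set a := (c1 0 i)%:~R; set x := (z 0 i)%:~R; set d := (c0 0 i)%:~R - a.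
move=> /andP[h1 h2].
have [dp|dn|d0] := ltrgtP 0 d.
- rewrite ler_pdivrMr //; nra.
- rewrite ler_ndivrMr //; nra.
- by [].
Qed.

Lemma PP_lower k (c0 c1 z : 'rV[int]_k) l m : PP c0 c1 l z -> 0 <= m <= l ->
  (forall i, Lf c0 c1 z i <= m) -> PP c0 c1 m z.
Proof.
move=> [/andP[l0 l1] hz] /andP[m0 ml] hL; split.
  by rewrite m0 /=; apply: le_trans ml l1.
move=> i; move: (hz i) (hL i); rewrite /pl /Lf /=.
set a := (c1 0 i)%:~R; set x := (z 0 i)%:~R; set d := (c0 0 i)%:~R - a.
move=> /andP[h1 h2].
have [dp|dn|d0] := ltrgtP 0 d.
- rewrite ler_pdivrMr // => h3; apply/andP; split; nra.
- rewrite ler_ndivrMr // => h3; apply/andP; split; nra.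
- move=> _; rewrite -d0 !mulr0 addr0; rewrite -d0 mulr0 addr0 in h1 h2.
  by rewrite h1 h2.
Qed.

Lemma PP_move k (c0 c1 z z' : 'rV[int]_k) m i : PP c0 c1 m z ->
  (forall j, j != i -> z' 0 j = z 0 j) ->
  pl c0 c1 m i <= (z' 0 i)%:~R <= pl c0 c1 m i + 1 -> PP c0 c1 m z'.
Proof.
move=> [hm hz] he hi; split => // j.
by have [->|/he ->] := eqVneq j i.
Qed.

Lemma Mlt k (c z z' : 'rV[int]_k) i :
  (forall j, j != i -> z' 0 j = z 0 j) ->
  (absz (z' 0 i - c 0 i)%R < absz (z 0 i - c 0 i)%R)%N -> (Mz c z' < Mz c z)%N.
Proof.
move=> he hi; rewrite /Mz (bigD1 i) //= [X in (_ < X)%N](bigD1 i) //=.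
rewrite (eq_bigr (fun j => absz (z 0 j - c 0 j)%R)); last first.
  by move=> j /he ->.
by rewrite ltn_add2r.
Qed.

Lemma entP k (z : 'rV[int]_k) i j :
  (z + delta_mx 0 i) 0 j = if i == j then z 0 j + 1 else z 0 j.
Proof. by rewrite !mxE eqxx /= [j == i]eq_sym; case: (i == j) => //=; rewrite mulr0n addr0. Qed.
Lemma entM k (z : 'rV[int]_k) i j :
  (z - delta_mx 0 i) 0 j = if i == j then z 0 j - 1 else z 0 j.
Proof. by rewrite !mxE eqxx /= [j == i]eq_sym; case: (i == j) => //=; rewrite mulr0n subr0. Qed.

Lemma stepP k (z : 'rV[int]_k) i : lattice_step z (z + delta_mx 0 i).
Proof. exists i; left; by rewrite addrAC subrr add0r. Qed.
Lemma stepM k (z : 'rV[int]_k) i : lattice_step z (z - delta_mx 0 i).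
Proof. exists i; right; by rewrite addrAC subrr add0r. Qed.

Lemma pl0 k (c0 c1 : 'rV[int]_k) i : pl c0 c1 0 i = (c1 0 i)%:~R.
Proof. by rewrite /pl mul0r addr0. Qed.

Lemma key k (c0 c1 z : 'rV[int]_k) l : PP c0 c1 l z -> z != c1' c0 c1 ->
  exists l' z', PP c0 c1 l' z' /\ lattice_step z z' /\
    (Mz (c1' c0 c1) z' < Mz (c1' c0 c1) z)%N.
Proof.
move=> hP hne.
have hLl := Lf_le hP.
have [/andP[l0 l1] _] := hP.
case: (boolP [exists i, 0 < Lf c0 c1 z i]) => [/existsP[j0 hj0]|hno].
- pose j := [arg max_(i > j0) Lf c0 c1 z i]%O.
  have [jm mpos] : (forall i, Lf c0 c1 z i <= Lf c0 c1 z j) /\ 0 < Lf c0 c1 z j.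
    rewrite /j; case: arg_maxP => // i _ hi; split; first by move=> i'; exact: hi.
    exact: lt_le_trans hj0 (hi j0 isT).
  have hPm : PP c0 c1 (Lf c0 c1 z j) z.
    apply: PP_lower hP _ jm; by rewrite (ltW mpos) hLl.
  have hne' i : i != j -> (j == i) = false by rewrite eq_sym => /negbTE.
  move: hPm mpos; rewrite /Lf /=.
  set a := (c1 0 j)%:~R; set x := (z 0 j)%:~R; set d := (c0 0 j)%:~R - a.
  have hdz : d = (c0 0 j - c1 0 j)%:~R by rewrite /d /a rmorphB.
  have [dp|dn|d0] := ltrgtP 0 d => hPm mpos.
  + exists ((x - 1 - a) / d), (z - delta_mx 0 j); split; last split.
    * apply: (@PP_move _ _ _ _ _ _ j hPm).
        by move=> i hi; rewrite entM hne' //.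
      rewrite entM eqxx /pl -/a -/d rmorphB /= -/x.
      have -> : a + (x - 1 - a) / d * d = x - 1 by field; rewrite gt_eqF.
      lra.
    * exact: stepM.
    * apply: (@Mlt _ _ _ _ j); first by move=> i hi; rewrite entM hne' //.
      rewrite entM eqxx mxE.
      have hz : 0 < c0 0 j - c1 0 j by rewrite -(ltr_int rat) -hdz.
      have h1 : 1 <= z 0 j - c1 0 j.
        rewrite -(ler_int rat) rmorphB /= -/x -/a.
        have : 0 < x - 1 - a by move: mpos; rewrite pmulr_lgt0 // invr_gt0.
        lra.
      rewrite ltNge (ltW hz) /=; lia.
  + exists ((x - a) / d), (z + delta_mx 0 j); split; last split.
    * apply: (@PP_move _ _ _ _ _ _ j hPm).
        by move=> i hi; rewrite entP hne' //.
      rewrite entP eqxx /pl -/a -/d rmorphD /= -/x.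
      have -> : a + (x - a) / d * d = x by field; rewrite lt_eqF.
      lra.
    * exact: stepP.
    * apply: (@Mlt _ _ _ _ j); first by move=> i hi; rewrite entP hne' //.
      rewrite entP eqxx mxE.
      have hz : c0 0 j - c1 0 j < 0 by rewrite -(ltr_int rat) -hdz.
      have h1 : z 0 j - c1 0 j <= -1.
        have : x - a < 0 by move: mpos; rewrite nmulr_lgt0 // invr_lt0.
        rewrite /x /a -rmorphB /= ltrz0 => ?; lia.
      case: ifP => _; lia.
  + by rewrite ltxx in mpos.
- have hL i : Lf c0 c1 z i <= 0.
    by move/existsPn: hno => /(_ i); rewrite -leNgt.
  have hP0 : PP c0 c1 0 z by apply: PP_lower hP _ hL; rewrite lexx l0.
  have [i hi] : exists i, z 0 i != c1' c0 c1 0 i.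
    apply/existsP; apply: contraR hne => /existsPn h; apply/eqP/rowP => i.
    by move: (h i); rewrite negbK => /eqP.
  have [_ /(_ i)] := hP0; rewrite pl0 -(rmorphD _ _ 1) !ler_int => /andP[hz1 hz2].
  have hne' i' : i' != i -> (i == i') = false by rewrite eq_sym => /negbTE.
  move: hi; rewrite mxE; case: ifP => hneg hi.
  + exists 0, (z + delta_mx 0 i); split; last split.
    * apply: (@PP_move _ _ _ _ _ _ i hP0); first by move=> i' hi'; rewrite entP hne' //.
      rewrite entP eqxx pl0 -!(rmorphD _ _ 1) !ler_int; apply/andP; split; lia.
    * exact: stepP.
    * apply: (@Mlt _ _ _ _ i); first by move=> i' hi'; rewrite entP hne' //.
      rewrite entP eqxx mxE hneg; lia.
  + exists 0, (z - delta_mx 0 i); split; last split.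
    * apply: (@PP_move _ _ _ _ _ _ i hP0); first by move=> i' hi'; rewrite entM hne' //.
      rewrite entM eqxx pl0 -(rmorphD _ _ 1) !ler_int; apply/andP; split; lia.
    * exact: stepM.
    * apply: (@Mlt _ _ _ _ i); first by move=> i' hi'; rewrite entM hne' //.
      rewrite entM eqxx mxE hneg; lia.
Qed.

Inductive reach k (S : 'rV[int]_k -> Prop) : 'rV[int]_k -> 'rV[int]_k -> Prop :=
| RR z : S z -> reach S z z
| RS z y w : S z -> lattice_step z y -> reach S y w -> reach S z w.

Lemma reach_S k (S : 'rV[int]_k -> Prop) z w : reach S z w -> S z /\ S w.
Proof. by elim=> [x hx|x y v hx _ _ [_ h]]. Qed.

Lemma reach_trans k (S : 'rV[int]_k -> Prop) x y w :
  reach S x y -> reach S y w -> reach S x w.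
Proof.
elim=> [//|a b c ha hab _ IH] h; exact: RS ha hab (IH h).
Qed.

Lemma step_sym k (a b : 'rV[int]_k) : lattice_step a b -> lattice_step b a.
Proof.
move=> [j [h|h]]; exists j; [right|left]; by rewrite -opprB h ?opprK.
Qed.

Lemma reach_sym k (S : 'rV[int]_k -> Prop) z w : reach S z w -> reach S w z.
Proof.
elim=> [x hx|a b c ha hab hbc IH]; first exact: RR.
apply: reach_trans IH _.
have [hb _] := reach_S hbc.
exact: RS hb (step_sym hab) (RR ha).
Qed.

Lemma reach_path k (S : 'rV[int]_k -> Prop) z w : reach S z w ->
  exists s, lattice_path z s /\ (forall y, y \in z :: s -> S y) /\ last z s = w.
Proof.
elim=> [x hx|a b c ha hab _ [s [hp [hm hl]]]].
  by exists [::]; split=> //; split=> // y; rewrite inE => /eqP ->.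
exists (b :: s); split; first by split.
split=> // y; rewrite inE => /orP[/eqP ->|hy] //; exact: hm.
Qed.

Theorem mainTheorem20 (k : nat) (c0 c1 : 'rV[int]_k) :
  lattice_path_connected
    (fun z : 'rV[int]_k =>
       in_conv_hull (fun p => box c0 p \/ box c1 p) (toQ z)).
Proof.
set S := fun z : 'rV[int]_k => _.
have toc n : forall z, S z -> (Mz (c1' c0 c1) z <= n)%N -> reach S z (c1' c0 c1).
  elim: n => [|n IH] z hS hM.
    have [hz|hne] := eqVneq z (c1' c0 c1); first by rewrite -hz; exact: RR.
    have [l hl] := S_PP hS; have [l' [z' [hP' [hst hlt]]]] := key hl hne.
    by move: (leq_trans hlt hM).
  have [hz|hne] := eqVneq z (c1' c0 c1); first by rewrite -hz; exact: RR.
  have [l hl] := S_PP hS; have [l' [z' [hP' [hst hlt]]]] := key hl hne.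
  apply: RS hS hst (IH _ (PP_S hP') _); rewrite -ltnS; exact: leq_trans hlt hM.
move=> z1 z2 h1 h2.
have r := reach_trans (toc _ _ h1 (leqnn _)) (reach_sym (toc _ _ h2 (leqnn _))).
have [s [hp [hm hl]]] := reach_path r.
by exists s; split=> //; split=> //; rewrite -hl mem_last.
Qed.
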